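(* Let $\mathcal{M}$ be the set of all marked overpartitions. There is a bijection $\Phi:\mathcal{M}\to\overline{SP}$ which preserves weight (if $(\pi,j)$ is a marked overpartition of $n$ then $|\Phi(\pi,j)|=n$) and satisfies, for every $(\pi,j)\in\mathcal M$ with $\vec\lambda=\Phi(\pi,j)$, \[ \bar k(\pi,j)=k(\vec\lambda)\qquad\text{and}\qquad\overline{\mathrm{sptcrank}}(\pi,j)=\overline{\mathrm{crank}}(\vec\lambda). \]
   Context: For a partition $\lambda$, $s(\lambda)$ is its smallest part ($s(\emptyset)=\infty$) and $|\lambda|$ its sum. Marked overpartitions: an overpartition of $n$ is a partition of $n$ in which the first occurrence of each part size may be overlined; a marked overpartition of $n$ is a pair $(\pi,j)$ where $\pi$ is an overpartition of $n$ whose smallest part is not overlined and $1\le j\le\nu(\pi)$, $\nu(\pi)$ the number of occurrences of the smallest part. Let $\pi_1$ be the partition of non-overlined parts and $\pi_2$ the partition (into distinct parts) of overlined parts. For a positive integer $m=b(m)2^{j(m)}$ with $b(m)$ odd and integers $m\ge n+1$, let $j_0(m,n)$ be the least nonnegative $j_0$ with $b(m)2^{j_0}\ge n+1$; $k(m,n)=0$ if $b(m)\ge2n$, $k(m,n)=2^{j(m)-j_0(m,n)}$ if $b(m)2^{j_0(m,n)}<2n$, $k(m,n)=0$ if $b(m)2^{j_0(m,n)}=2n$; and $k(\rho,n)=\sum_{m\in\rho}k(m,n)$ for $\rho$ into distinct parts $\ge n+1$. Set $\bar k(\pi,j)=\nu(\pi_1)-j+k(\pi_2,s(\pi_1))$,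 and $\overline{\mathrm{sptcrank}}(\pi,j)$ = (number of parts of $\pi_1$ that are $\ge s(\pi_1)+\bar k$) $-\bar k$ if $\bar k>0$, = (number of parts of $\pi_1$) $-1$ if $\bar k=0$. $\overline{SP}$ is the set of pairs $\vec\lambda=(\lambda_1,\lambda_2)$ of partitions with $0<s(\lambda_1)\le s(\lambda_2)$ such that every part of $\lambda_2$ that is $\ge2s(\lambda_1)+1$ is odd; $|\vec\lambda|=|\lambda_1|+|\lambda_2|$. $k(\vec\lambda)$ is the number of parts $j$ of $\lambda_2$ (with multiplicity) with $s(\lambda_1)\le j\le2s(\lambda_1)-1$; with $k=k(\vec\lambda)$, $\overline{\mathrm{crank}}(\vec\lambda)$ = (number of parts of $\lambda_1$ that are $\ge s(\lambda_1)+k$) $-k$ if $k>0$, = (number of parts of $\lambda_1$) $-1$ if $k=0$. *)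

(* Defs.v *)
From mathcomp Require Import all_boot all_algebra.
Set Implicit Arguments. Unset Strict Implicit. Unset Printing Implicit Defensive.

Definition is_part (l : seq nat) : bool := sorted geq l && all (fun x => 0 < x) l.
Definition is_dpart (l : seq nat) : bool :=
  sorted (fun a b => b < a) l && all (fun x => 0 < x) l.

(* smallest part of a nonempty list (only used on nonempty partitions;
   the convention s(empty)=infinity is handled explicitly in the predicates) *)
Definition spart (l : seq nat) : nat := foldr minn (head 0 l) l.

Definition nu (l : seq nat) : nat := count (pred1 (spart l)) l.

Definition jm (m : nat) : nat := logn 2 m.
Definition bm (m : nat) : nat := m %/ 2 ^ jm m.
(* least j0 >= 0 with b(m) 2^j0 >= n+1  (it is always <= n+1 since b(m) >= 1) *)
Definition j0 (m n : nat) : nat := find (fun i => n.+1 <= bm m * 2 ^ i) (iota 0 n.+2).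

Definition kmn (m n : nat) : nat :=
  if 2 * n <= bm m then 0
  else if bm m * 2 ^ j0 m n < 2 * n then 2 ^ (jm m - j0 m n)
  else 0.

Definition krho (rho : seq nat) (n : nat) : nat := sumn (map (fun m => kmn m n) rho).

(* Marked overpartition (pi, j), encoded as (pi1, pi2, j): pi1 the non-overlined
   parts, pi2 the overlined parts (distinct).  The smallest part of pi is not
   overlined, i.e. all overlined parts exceed s(pi1); pi1 nonempty since j >= 1. *)
Definition is_marked (x : seq nat * seq nat * nat) : bool :=
  let: (p1, p2, j) := x in
  [&& is_part p1, p1 != [::], is_dpart p2, all (fun m => spart p1 < m) p2,
      0 < j & j <= nu p1].

Definition weightM (x : seq nat * seq nat * nat) : nat :=
  let: (p1, p2, _) := x in sumn p1 + sumn p2.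

Definition kbar (x : seq nat * seq nat * nat) : nat :=
  let: (p1, p2, j) := x in nu p1 - j + krho p2 (spart p1).

Definition sptcrank (x : seq nat * seq nat * nat) : int :=
  let: (p1, _, _) := x in
  let k := kbar x in
  if 0 < k then ((count (fun p => (spart p1 + k <= p)%N) p1)%:Z - k%:Z)%R
  else ((size p1)%:Z - 1)%R.

Definition is_SPbar (y : seq nat * seq nat) : bool :=
  let: (l1, l2) := y in
  [&& is_part l1, l1 != [::], is_part l2, all (fun p => spart l1 <= p) l2
    & all (fun p : nat => ((2 * spart l1).+1 <= p) ==> odd p) l2].

Definition weightSP (y : seq nat * seq nat) : nat :=
  let: (l1, l2) := y in sumn l1 + sumn l2.

Definition kSP (y : seq nat * seq nat) : nat :=
  let: (l1, l2) := y in
  count (fun p : nat => (spart l1 <= p) && (p <= (2 * spart l1).-1)) l2.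

Definition crankSP (y : seq nat * seq nat) : int :=
  let: (l1, _) := y in
  let k := kSP y in
  if 0 < k then ((count (fun p => (spart l1 + k <= p)%N) l1)%:Z - k%:Z)%R
  else ((size l1)%:Z - 1)%R.

Definition Mset := {x : seq nat * seq nat * nat | is_marked x}.
Definition SPset := {y : seq nat * seq nat | is_SPbar y}.

(* Main.v *)
Require Import Defs.
From mathcomp Require Import all_boot all_algebra.
From mathcomp Require Import zify.

Lemma pcount {T : eqType} {s1 s2 : seq T} (a : pred T) :
  perm_eq s1 s2 -> count a s1 = count a s2.
Proof. by move/permP. Qed.

Lemma geq_total' : total (geq : rel nat).
Proof. by move=> x y /=; apply: leq_total. Qed.
Lemma geq_trans' : transitive (geq : rel nat).
Proof. by move=> x y z /= h1 h2; apply: leq_trans h2 h1. Qed.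
Lemma geq_anti' : antisymmetric (geq : rel nat).
Proof. by move=> x y /= /andP [h1 h2]; apply/eqP; rewrite eqn_leq h1 h2. Qed.

Lemma sort_eq (l l' : seq nat) : sorted geq l' -> perm_eq l l' -> sort geq l = l'.
Proof.
move=> hs hp; apply: (sorted_eq geq_trans' geq_anti') => //.
  exact: (@sort_sorted _ geq geq_total').
by rewrite perm_sort.
Qed.

Lemma foldr_min_le a (l : seq nat) x : x \in l -> foldr minn a l <= x.
Proof.
elim: l => //= y l IH; rewrite inE => /orP [/eqP -> | h]; first exact: geq_minl.
by rewrite geq_min IH ?orbT.
Qed.
Lemma foldr_min_in a (l : seq nat) : foldr minn a l \in a :: l.
Proof.
elim: l => [|y l IH] /=; first by rewrite inE.
rewrite /minn; case: ifP => _; first by rewrite !inE eqxx orbT.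
move: IH; rewrite !inE => /orP [->|->]; by rewrite ?orbT.
Qed.
Lemma spart_le (l : seq nat) x : x \in l -> spart l <= x.
Proof. exact: foldr_min_le. Qed.
Lemma spart_in (l : seq nat) : l != [::] -> spart l \in l.
Proof.
case: l => // y l _; have := foldr_min_in y (y :: l).
by rewrite /spart /= inE => /orP [/eqP ->|]; rewrite ?inE ?eqxx.
Qed.
Lemma spart_eq (l : seq nat) a : a \in l -> all (fun x => a <= x) l -> spart l = a.
Proof.
move=> ha /allP hall; apply/eqP; rewrite eqn_leq spart_le //=.
apply: hall; apply: spart_in; by case: l ha.
Qed.

Lemma decomp_count (l : seq nat) s (a : pred nat) : all (fun x => s <= x) l ->
  count a l = count a (filter (fun x => s < x) l) + a s * count_mem s l.
Proof.
elim: l => //= [|x l IH]; first by rewrite muln0.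
case/andP => hx /IH ->.
case: (ltngtP s x) hx => // [hsx|<-] _ /=.
  by rewrite add0n addnA.
case: (a s) => /=; lia.
Qed.

Lemma decomp_perm (l : seq nat) s : all (fun x => s <= x) l ->
  perm_eq l (filter (fun x => s < x) l ++ nseq (count_mem s l) s).
Proof.
move=> h; apply/permP => a; rewrite count_cat count_nseq (decomp_count l s a h).
by rewrite mulnC.
Qed.

Definition bits (mu : nat) : seq nat := [seq i <- iota 0 mu.+1 | odd (mu %/ 2 ^ i)].

Definition shiftE (E : seq nat) := [seq e.-1 | e <- E & 0 < e].

Lemma shiftE_uniq E : uniq E -> uniq (shiftE E).
Proof.
move=> u; rewrite map_inj_in_uniq ?filter_uniq //.
move=> x y; rewrite !mem_filter => /andP [hx _] /andP [hy _]; lia.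
Qed.

Lemma mem_shiftE E i : (i \in shiftE E) = (i.+1 \in E).
Proof.
apply/mapP/idP => [[x] | h].
  by rewrite mem_filter => /andP [hx hxE] ->; rewrite prednK.
by exists i.+1; rewrite // mem_filter h.
Qed.

Lemma sum_split E : uniq E ->
  \sum_(e <- E) 2 ^ e = (0 \in E) + 2 * \sum_(e <- shiftE E) 2 ^ e.
Proof.
elim: E => [|x E IH]; first by rewrite !big_nil.
rewrite cons_uniq => /andP [hx /IH {}IH].
rewrite big_cons IH inE /shiftE /=.
case: x hx => [|x] hx /=.
  by rewrite (negbTE hx) expn0 /=; lia.
rewrite big_cons expnS /=; lia.
Qed.

Lemma bit_char E i : uniq E -> odd ((\sum_(e <- E) 2 ^ e) %/ 2 ^ i) = (i \in E).
Proof.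
elim: i E => [|i IH] E u.
  by rewrite expn0 divn1 sum_split // oddD oddM /= addbF; case: (0 \in E).
rewrite expnS divnMA sum_split // addnC mulnC.
have -> : ((\sum_(e <- shiftE E) 2 ^ e) * 2 + (0 \in E)) %/ 2 = \sum_(e <- shiftE E) 2 ^ e.
  by rewrite divnMDl // divn_small ?addn0 //; case: (0 \in E).
by rewrite IH ?shiftE_uniq // mem_shiftE.
Qed.

Lemma bits_uniq mu : uniq (bits mu).
Proof. by rewrite filter_uniq // iota_uniq. Qed.

Lemma mem_bits mu i : (i \in bits mu) = (i <= mu) && odd (mu %/ 2 ^ i).
Proof. by rewrite mem_filter mem_iota andbC. Qed.

Lemma mem_bits_sum E i : uniq E -> (i \in bits (\sum_(e <- E) 2 ^ e)) = (i \in E).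
Proof.
move=> u; rewrite mem_bits bit_char //.
case hi: (i \in E); rewrite ?andbF // andbT.
rewrite (bigD1_seq i) //=.
have := ltn_expl i (ltnSn 1); lia.
Qed.

Lemma bits_eq a b : (forall i, odd (a %/ 2 ^ i) = odd (b %/ 2 ^ i)) -> a = b.
Proof.
move: {2}(a + b).+1 (ltnSn (a + b)) => n.
elim: n a b => // n IH a b hab h.
have h0 := h 0; rewrite expn0 !divn1 in h0.
have hh : a %/ 2 = b %/ 2.
  case: (posnP (a + b)) => [z|pos].
    have -> : a = 0 by lia.
    have -> : b = 0 by lia. done.
  apply: IH; first lia.
  by move=> i; rewrite -!divnMA -expnS h.
rewrite (divn_eq a 2) (divn_eq b 2) hh !modn2 h0 //.
Qed.

Lemma sum_bits mu : \sum_(i <- bits mu) 2 ^ i = mu.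
Proof.
apply: bits_eq => i; rewrite bit_char ?bits_uniq // mem_bits.
case: (leqP i mu) => // h.
rewrite divn_small //; apply: leq_trans h _; exact: ltnW (ltn_expl _ (ltnSn 1)).
Qed.

Definition cf s m := bm m * 2 ^ j0 m s.
Definition ef s m := jm m - j0 m s.
Definition allowed s c := (s < c) && ((2 * s < c) ==> odd c).

Lemma F1 m : 0 < m -> m = bm m * 2 ^ jm m /\ odd (bm m).
Proof.
move=> hm; have [k hk hm'] := pfactor_coprime (isT : prime 2) hm.
have -> : bm m = k by rewrite /bm /jm {1}hm' mulnK // expn_gt0.
by rewrite /jm -hm' -coprime2n.
Qed.

Lemma D b k : odd b -> jm (b * 2 ^ k) = k /\ bm (b * 2 ^ k) = b.
Proof.
move=> hb; have b0 : 0 < b by case: b hb.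
have hj : jm (b * 2 ^ k) = k.
  rewrite /jm lognM ?expn_gt0 // pfactorK // logn_coprime ?coprime2n //.
by split => //; rewrite /bm hj mulnK // expn_gt0.
Qed.

Lemma find_char (P : pred nat) n a : a < n -> P a -> (forall i, i < a -> ~~ P i) ->
  find P (iota 0 n) = a.
Proof.
move=> han hPa hmin.
have hhas : has P (iota 0 n) by apply/hasP; exists a; rewrite ?mem_iota.
case: (ltngtP (find P (iota 0 n)) a) => // h.
  have := nth_find 0 hhas; rewrite nth_iota ?add0n; last by apply: ltn_trans h han.
  by move: (hmin _ h) => /negbTE ->.
by have := before_find 0 h; rewrite nth_iota // hPa.
Qed.

Lemma find_props (P : pred nat) n a : a < n -> P a ->
  let f := find P (iota 0 n) in [/\ f <= a, P f & forall i, i < f -> ~~ P i].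
Proof.
move=> han hPa f.
have hhas : has P (iota 0 n) by apply/hasP; exists a; rewrite ?mem_iota.
have fa : f <= a.
  rewrite leqNgt; apply/negP => h.
  by have := before_find 0 h; rewrite nth_iota // hPa.
split => //.
  by have := nth_find 0 hhas; rewrite nth_iota ?add0n //; apply: leq_ltn_trans fa han.
move=> i hi; have := before_find 0 hi; rewrite nth_iota ?add0n ?(ltn_trans hi) //.
  by move=> ->.
by apply: leq_ltn_trans fa han.
Qed.

Lemma j0_props s m : s < m ->
  [/\ s < bm m * 2 ^ j0 m s, j0 m s <= jm m &
      forall i, i < j0 m s -> bm m * 2 ^ i <= s].
Proof.
move=> hsm; have [hm ho] := F1 m (leq_ltn_trans (leq0n s) hsm).
have b0 : 0 < bm m by case: (bm m) ho.
set P := (fun i => s.+1 <= bm m * 2 ^ i).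
have Pa : P (minn (jm m) s.+1).
  rewrite /P /minn; case: ifP => _; first by rewrite -hm.
  apply: leq_trans (leq_pmull _ b0); exact: ltnW (ltn_expl _ (ltnSn 1)).
have [fa Pf hmin] := find_props P s.+2 (minn (jm m) s.+1) (leq_ltn_trans (geq_minr (jm m) s.+1) (ltnSn s.+1)) Pa.
rewrite /j0; split => //.
  by apply: leq_trans fa (geq_minl _ _).
move=> i /hmin; rewrite /P; lia.
Qed.

Lemma cf_ef s m : s < m -> m = cf s m * 2 ^ ef s m /\ allowed s (cf s m).
Proof.
move=> hsm; have [h1 h2 h3] := j0_props s m hsm.
have [hm ho] := F1 m (leq_ltn_trans (leq0n s) hsm).
split.
  by rewrite /cf /ef -mulnA -expnD subnKC.
rewrite /allowed h1 /=; apply/implyP => h.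
rewrite /cf in h *; move: h3 h h1; case: (j0 m s) => [|k] h3 h h1.
  by rewrite expn0 muln1.
have := h3 k (ltnSn k); rewrite expnS in h *.
set X := bm m * 2 ^ k; rewrite mulnCA -/X in h * => hX; lia.
Qed.

Lemma uniq_dec s c i : allowed s c -> cf s (c * 2 ^ i) = c /\ ef s (c * 2 ^ i) = i.
Proof.
case/andP => hsc hodd.
have [hc hb] := F1 c (leq_ltn_trans (leq0n s) hsc).
set b := bm c in hc hb; set a := jm c in hc.
have [hj hbm] := D b (a + i) hb.
have e : c * 2 ^ i = b * 2 ^ (a + i) by rewrite hc -mulnA -expnD.
have key : 0 < a -> b * 2 ^ a.-1 <= s.
  move=> apos.
  have hc2 : c = 2 * (b * 2 ^ a.-1) by rewrite hc -(prednK apos) expnS mulnCA.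
  have : ~~ odd c by rewrite hc2 oddM.
  move: hodd; rewrite -implybNN => /implyP h /h; rewrite -leqNgt hc2; lia.
have b0 : 0 < b by case: (b) hb.
have hj0 : j0 (c * 2 ^ i) s = a.
  rewrite /j0 e; apply: find_char; rewrite ?hbm.
  - case: (posnP a) => [->//|apos].
    have hX := key apos.
    have : a.-1 < 2 ^ a.-1 by apply: ltn_expl.
    have : 2 ^ a.-1 <= b * 2 ^ a.-1 by apply: leq_pmull.
    lia.
  - by rewrite -hc.
  - move=> k hk; rewrite -leqNgt.
    have hX := key (leq_ltn_trans (leq0n k) hk).
    have : b * 2 ^ k <= b * 2 ^ a.-1.
      by rewrite leq_mul2l leq_pexp2l // ?orbT //; lia.
    lia.
rewrite /cf /ef hj0 e hj hbm -hc; split => //; lia.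
Qed.

Lemma cf_pos s m : s < m -> s < cf s m.
Proof. by move/(cf_ef s m) => [_ /andP []]. Qed.

Lemma kmn_eq s m : 0 < s -> s < m ->
  kmn m s = (s <= cf s m <= (2 * s).-1) * 2 ^ ef s m.
Proof.
move=> s0 hsm; have [h1 h2 h3] := j0_props s m hsm.
rewrite /kmn /cf /ef.
case: ifP => hb.
  have -> : j0 m s = 0.
    rewrite /j0; apply: find_char => //; rewrite expn0 muln1; lia.
  rewrite expn0 muln1; have : (bm m <= (2 * s).-1) = false by lia.
  by move=> ->; rewrite andbF.
case: ifP => hc.
  have -> : s <= bm m * 2 ^ j0 m s <= (2 * s).-1 by apply/andP; split; lia.
  by rewrite mul1n.
have -> // : s <= bm m * 2 ^ j0 m s <= (2 * s).-1 = false.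
apply/negbTE; rewrite negb_and; apply/orP; right; lia.
Qed.

Definition G s p2 := flatten [seq nseq (2 ^ ef s m) (cf s m) | m <- p2].
Definition H (l : seq nat) :=
  flatten [seq [seq c * 2 ^ i | i <- bits (count_mem c l)] | c <- undup l].

Lemma G_count s p (a : pred nat) :
  count a (G s p) = \sum_(m <- p) a (cf s m) * 2 ^ ef s m.
Proof.
elim: p => [|m p IH]; first by rewrite big_nil.
by rewrite /G /= count_cat -/(G s p) IH big_cons count_nseq.
Qed.

Lemma G_sum s p : all (fun m => s < m) p -> sumn (G s p) = sumn p.
Proof.
elim: p => [|m p IH] //= /andP [hm /IH h].
rewrite sumn_cat -/(G s p) h sumn_nseq.
by have [<- _] := cf_ef s m hm.
Qed.

Lemma G_allowed s p : all (fun m => s < m) p -> all (allowed s) (G s p).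
Proof.
move=> /allP hp; apply/allP => x; rewrite /G => /flattenP [y /mapP [m hm ->]].
by move/nseqP => [-> _]; have [_ ->] := cf_ef s m (hp m hm).
Qed.

Lemma sum_ind1 (r : seq nat) c0 (X : nat -> nat) :
  \sum_(c <- r) (c == c0) * X c = count_mem c0 r * X c0.
Proof.
elim: r => [|c r IH]; first by rewrite big_nil.
rewrite big_cons IH /=; case: eqP => [->|_] /=; lia.
Qed.

Lemma bits0 : bits 0 = [::].
Proof. by []. Qed.

Lemma count_undup_mem (l : seq nat) c : count_mem c (undup l) = (c \in l).
Proof. by rewrite count_uniq_mem ?undup_uniq // mem_undup. Qed.

Lemma dec_eq s c i m : allowed s c -> s < m ->
  (c * 2 ^ i == m) = (c == cf s m) && (i == ef s m).
Proof.
move=> hc hm; apply/eqP/andP => [<- | [/eqP -> /eqP ->]].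
  by have [-> ->] := uniq_dec s c i hc.
by have [<- _] := cf_ef s m hm.
Qed.

Lemma H_count s l m : all (allowed s) l ->
  count_mem m (H l) = (s < m) && (ef s m \in bits (count_mem (cf s m) l)).
Proof.
move=> /allP hl; rewrite /H count_flatten sumnE !big_map.
case: (ltnP s m) => hm /=.
  rewrite big_seq (eq_bigr (fun c => (c == cf s m) * (ef s m \in bits (count_mem c l)))).
    rewrite -big_seq sum_ind1 count_undup_mem.
    case hin: (cf s m \in l) => /=; first by rewrite mul1n.
    by move/count_memPn: (negbT hin) => ->; rewrite bits0.
  move=> c; rewrite mem_undup => /hl hc; rewrite count_map.
  transitivity (count (fun i => (c == cf s m) && (i == ef s m)) (bits (count_mem c l))).
    by apply: eq_count => i /=; rewrite (dec_eq _ _ _ _ hc hm).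
  case: (c == cf s m) => /=; last by rewrite count_pred0.
  by rewrite mul1n count_uniq_mem ?bits_uniq.
rewrite big1_seq // => c /andP [_]; rewrite mem_undup => /hl /andP [hc _].
rewrite count_map; apply/eqP; rewrite -leqn0 leqNgt -has_count.
apply/hasP => [[i _ /= /eqP he]].
have : c <= c * 2 ^ i by rewrite leq_pmulr ?expn_gt0.
lia.
Qed.

Lemma H_count2 s l c0 : all (allowed s) l ->
  \sum_(m <- H l) (cf s m == c0) * 2 ^ ef s m = count_mem c0 l.
Proof.
move=> /allP hl; rewrite /H big_flatten big_map big_seq.
rewrite (eq_bigr (fun c => (c == c0) * count_mem c l)).
  rewrite -big_seq sum_ind1 count_undup_mem.
  case hin: (c0 \in l) => /=; first by rewrite mul1n.
  by move/count_memPn: (negbT hin) => ->.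
move=> c; rewrite mem_undup => /hl hc; rewrite big_map.
rewrite (eq_bigr (fun i => (c == c0) * 2 ^ i)); last first.
  by move=> i _; have [-> ->] := uniq_dec s c i hc.
by rewrite -big_distrr /= sum_bits.
Qed.

Lemma perm_cm (s1 s2 : seq nat) :
  (forall x, count_mem x s1 = count_mem x s2) -> perm_eq s1 s2.
Proof.
elim: s1 s2 => [|x s1 IH] s2 h.
  case: s2 h => // y s2 /(_ y) /=; rewrite eqxx //.
have hx : x \in s2.
  by rewrite -has_pred1 has_count -h /= eqxx.
have hp := perm_to_rem hx.
suff hh : perm_eq (x :: s1) (x :: rem x s2).
  by apply: (@perm_trans _ (x :: rem x s2)) => //; rewrite perm_sym.
rewrite perm_cons; apply: IH => y.
have := h y; rewrite (pcount _ hp) /=; lia.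
Qed.

Lemma count_sort (X : seq nat) (a : pred nat) : count a (sort geq X) = count a X.
Proof. by apply: pcount; rewrite perm_sort. Qed.

Lemma mem_sortg (X : seq nat) x : (x \in sort geq X) = (x \in X).
Proof. by rewrite mem_sort. Qed.

Lemma sorted_sortg (X : seq nat) : sorted geq (sort geq X).
Proof. exact: (@sort_sorted _ geq geq_total'). Qed.

Definition PhiR (x : seq nat * seq nat * nat) : seq nat * seq nat :=
  let: (p1, p2, j) := x in
  let s := spart p1 in
  (sort geq ([seq y <- p1 | s < y] ++ nseq j s), sort geq (nseq (nu p1 - j) s ++ G s p2)).

Definition PsiR (y : seq nat * seq nat) : seq nat * seq nat * nat :=
  let: (l1, l2) := y in
  let s := spart l1 in
  (sort geq (l1 ++ nseq (count_mem s l2) s), sort geq (H [seq y <- l2 | s < y]),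
   count_mem s l1).

Lemma marked_facts p1 p2 j : is_marked (p1, p2, j) ->
  let s := spart p1 in
  [/\ 0 < s, s \in p1, all (fun x => s <= x) p1, all (fun x => s < x) p2 &
      [/\ uniq p2, 0 < j, j <= nu p1, sorted geq p1 & sorted (fun a b => b < a) p2]].
Proof.
case/and5P => /andP [sp1 pp1] ne /andP [sp2 pp2] hp2 /andP [j0 jn] s.
have hs : s \in p1 by apply: spart_in.
split => //.
- by move/allP: pp1 => /(_ s hs).
- by apply/allP => x /spart_le.
split => //.
by apply: sorted_uniq sp2 => // [x y z /= h1 h2|x /=]; [apply: ltn_trans h2 h1 | rewrite ltnn].
Qed.

Lemma SP_facts l1 l2 : is_SPbar (l1, l2) ->
  let s := spart l1 in
  [/\ 0 < s, s \in l1, all (fun x => s <= x) l1, all (fun x => s <= x) l2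
    & [/\ sorted geq l1, sorted geq l2 & all (allowed s) [seq y <- l2 | s < y]]].
Proof.
case/and5P => /andP [sp1 pp1] ne /andP [sp2 pp2] hl2 hodd s.
have hs : s \in l1 by apply: spart_in.
split => //.
- by move/allP: pp1 => /(_ s hs).
- by apply/allP => x /spart_le.
split => //.
rewrite all_filter; apply/allP => x hx; apply/implyP => hsx.
rewrite /allowed hsx /=; move/allP: hodd => /(_ x hx).
by [].
Qed.

Arguments marked_facts {p1 p2 j}.
Arguments SP_facts {l1 l2}.
Arguments G_allowed {s p}.
Arguments decomp_perm {l s}.

Lemma G_gt s p : all (fun m => s < m) p -> all (fun x => s < x) (G s p).
Proof.
move/G_allowed => /allP h; apply/allP => x /h /andP [] //.
Qed.
Arguments G_gt {s p}.

Lemma count_G_s s p : all (fun m => s < m) p -> count_mem s (G s p) = 0.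
Proof.
move/G_gt => h; apply/count_memPn; apply/negP => /(allP h); by rewrite ltnn.
Qed.

Lemma PhiR_spart p1 p2 j : is_marked (p1, p2, j) ->
  spart (PhiR (p1, p2, j)).1 = spart p1.
Proof.
move=> hm; have [s0 sin sge sp2 [u j0 jn sp1 sp2']] := marked_facts hm.
rewrite /=; apply: spart_eq.
  by rewrite mem_sortg mem_cat mem_nseq j0 eqxx orbT.
apply/allP => x; rewrite mem_sortg mem_cat mem_filter mem_nseq.
by case/orP => [/andP [h _]|/andP [_ /eqP ->]] //; apply: ltnW.
Qed.
Arguments PhiR_spart {p1 p2 j}.

Lemma PhiR_ok x : is_marked x -> is_SPbar (PhiR x).
Proof.
case: x => [[p1 p2] j] hm.
have hsp := PhiR_spart hm.
have [s0 sin sge sp2 [u j0 jn sp1 sp2']] := marked_facts hm.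
move: hsp; rewrite /PhiR /is_SPbar => -> .
set s := spart p1.
have l1ge : forall x, x \in [seq y <- p1 | s < y] ++ nseq j s -> s <= x.
  move=> x; rewrite mem_cat mem_filter mem_nseq.
  by case/orP => [/andP [h _]|/andP [_ /eqP ->]] //; apply: ltnW.
have l2ge : forall x, x \in nseq (nu p1 - j) s ++ G s p2 ->
   (x == s) || allowed s x.
  move=> x; rewrite mem_cat mem_nseq => /orP [/andP [_ ->] //|hx].
  by rewrite (allP (G_allowed sp2) x hx) orbT.
apply/and5P; split.
- rewrite /is_part sorted_sortg /=; apply/allP => x; rewrite mem_sortg => /l1ge.
  by apply: leq_trans.
- apply/negP => /eqP e.
  have : s \in sort geq ([seq y <- p1 | s < y] ++ nseq j s).
    by rewrite mem_sortg mem_cat mem_nseq j0 eqxx orbT.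
  by rewrite e.
- rewrite /is_part sorted_sortg /=; apply/allP => x; rewrite mem_sortg => /l2ge.
  case/orP => [/eqP -> //|/andP [h _]]; by apply: leq_ltn_trans h.
- apply/allP => x; rewrite mem_sortg => /l2ge.
  by case/orP => [/eqP -> //|/andP [h _]]; apply: ltnW.
- apply/allP => x; rewrite mem_sortg => /l2ge.
  case/orP => [/eqP -> |/andP [_ h]] //; apply/implyP; lia.
Qed.

Lemma sumn_sort (X : seq nat) : sumn (sort geq X) = sumn X.
Proof. by apply: perm_sumn; rewrite perm_sort. Qed.

Lemma nu_eq l s : spart l = s -> nu l = count_mem s l.
Proof. by rewrite /nu => ->. Qed.

Lemma PhiR_stats x : is_marked x ->
  [/\ weightSP (PhiR x) = weightM x, kbar x = kSP (PhiR x)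
    & sptcrank x = crankSP (PhiR x)].
Proof.
case: x => [[p1 p2] j] hm.
have hsp := PhiR_spart hm.
have [s0 sin sge sp2 [u j0 jn sp1 sp2']] := marked_facts hm.
rewrite /= in hsp.
have hk : kbar (p1, p2, j) = kSP (PhiR (p1, p2, j)).
  rewrite /kSP /PhiR /= hsp.
  set s := spart p1.
  rewrite count_sort count_cat count_nseq /= G_count.
  have -> : (s <= s) && (s <= (2 * s).-1) by apply/andP; split; lia.
  rewrite mul1n; congr (_ + _).
  rewrite /krho; elim: (p2) sp2 => [|m q IH] /=; first by rewrite big_nil.
  by case/andP => hm' /IH ->; rewrite big_cons kmn_eq //.
split => //.
- rewrite /weightSP /weightM /PhiR.
  set s := spart p1.
  rewrite !sumn_sort !sumn_cat !sumn_nseq G_sum //.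
  have := perm_sumn (decomp_perm sge); rewrite sumn_cat sumn_nseq.
  rewrite -(nu_eq p1 s erefl) -/s => ->.
  have e : s * j + s * (nu p1 - j) = s * nu p1 by rewrite -mulnDr subnKC.
  lia.
- rewrite /sptcrank /crankSP -hk.
  rewrite /PhiR hsp.
  set s := spart p1; set k := kbar _.
  case: ifP => hk0.
    rewrite count_sort count_cat count_nseq.
    rewrite (decomp_count _ _ (fun p => s + k <= p) sge) /=.
    have -> : s + k <= s = false by lia.
    by rewrite !mul0n.
  rewrite size_sort size_cat size_nseq.
  have hj : nu p1 = j.
    move: hk0; rewrite /k /kbar; lia.
  have := decomp_count _ _ predT sge; rewrite !count_predT /= -(nu_eq p1 s erefl) -/s.
  by rewrite mul1n hj => ->.
Qed.

Lemma mem_H s L x : all (allowed s) L ->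
  (x \in H L) = (s < x) && (ef s x \in bits (count_mem (cf s x) L)).
Proof. by move=> h; rewrite -has_pred1 has_count (H_count s L x h); case: (_ && _). Qed.

Lemma H_uniq s L : all (allowed s) L -> uniq (H L).
Proof. by move=> h; apply: count_mem_uniq => x; rewrite (H_count s L x h) (mem_H s L x h). Qed.

Lemma PsiR_spart l1 l2 : is_SPbar (l1, l2) ->
  spart (sort geq (l1 ++ nseq (count_mem (spart l1) l2) (spart l1))) = spart l1.
Proof.
move=> hy; have [s0 sin sge sge2 [sp1 sp2 hall]] := SP_facts hy.
apply: spart_eq; first by rewrite mem_sortg mem_cat sin.
apply/allP => x; rewrite mem_sortg mem_cat => /orP [/(allP sge) //|].
by rewrite mem_nseq => /andP [_ /eqP ->].
Qed.
Arguments PsiR_spart {l1 l2}.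

Lemma PsiR_ok y : is_SPbar y -> is_marked (PsiR y).
Proof.
case: y => l1 l2 hy.
have hsp := PsiR_spart hy.
have [s0 sin sge sge2 [sp1 sp2 hall]] := SP_facts hy.
rewrite /PsiR /is_marked hsp.
set s := spart l1 in hsp sin sge sge2 hall s0 *.
set L := [seq y <- l2 | s < y] in hall *.
have p1ge : forall x, x \in sort geq (l1 ++ nseq (count_mem s l2) s) -> s <= x.
  move=> x; rewrite mem_sortg mem_cat => /orP [/(allP sge) //|].
  by rewrite mem_nseq => /andP [_ /eqP ->].
have p2gt : forall x, x \in sort geq (H L) -> s < x.
  by move=> x; rewrite mem_sortg (mem_H s L x hall) => /andP [].
apply/andP; split.
  rewrite /is_part sorted_sortg /=; apply/allP => x /p1ge; exact: leq_trans.
apply/and5P; split.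
- apply/negP => /eqP e.
  have : s \in sort geq (l1 ++ nseq (count_mem s l2) s) by rewrite mem_sortg mem_cat sin.
  by rewrite e.
- apply/andP; split.
    have := gtn_sorted_uniq_geq (sort geq (H L)).
    rewrite sort_uniq (H_uniq s L hall) sorted_sortg => h; exact: h.
  apply/allP => x /p2gt; exact: leq_ltn_trans.
- by apply/allP => x /p2gt.
- by rewrite -has_pred1 has_count in sin.
- by rewrite /nu hsp count_sort count_cat leq_addr.
Qed.

Lemma sum_to_E s p c :
  \sum_(m <- p) (cf s m == c) * 2 ^ ef s m =
  \sum_(e <- [seq ef s m | m <- p & cf s m == c]) 2 ^ e.
Proof.
rewrite big_map big_filter [RHS]big_mkcond; apply: eq_bigr => m _.
by case: (cf s m == c); rewrite ?mul1n ?mul0n.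
Qed.

Lemma E_mem s p x : all (fun m => s < m) p -> s < x ->
  (ef s x \in [seq ef s m | m <- p & cf s m == cf s x]) = (x \in p).
Proof.
move=> /allP hp hx; apply/mapP/idP => [[m] | h].
  rewrite mem_filter => /andP [/eqP hc hm] he.
  have [e1 _] := cf_ef s m (hp m hm); have [e2 _] := cf_ef s x hx.
  by have -> : x = m by rewrite e1 e2 hc he.
by exists x; rewrite // mem_filter eqxx.
Qed.

Lemma E_uniq s p c : all (fun m => s < m) p -> uniq p ->
  uniq [seq ef s m | m <- p & cf s m == c].
Proof.
move=> /allP hp u; rewrite map_inj_in_uniq ?filter_uniq // => m1 m2.
rewrite !mem_filter => /andP [/eqP h1 hm1] /andP [/eqP h2 hm2] he.
have [e1 _] := cf_ef s m1 (hp m1 hm1); have [e2 _] := cf_ef s m2 (hp m2 hm2).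
by rewrite e1 e2 h1 h2 he.
Qed.

Lemma PsiPhi x : is_marked x -> PsiR (PhiR x) = x.
Proof.
case: x => [[p1 p2] j] hm.
have hsp := PhiR_spart hm; rewrite /= in hsp.
have [s0 sin sge sp2 [u j0 jn sp1 sp2']] := marked_facts hm.
rewrite /PhiR /PsiR hsp.
set s := spart p1 in hsp s0 sin sge sp2 *.
have hnu : count_mem s p1 = nu p1 by [].
have hc1 : count_mem s (sort geq ([seq y <- p1 | s < y] ++ nseq j s)) = j.
  rewrite count_sort count_cat count_nseq /= eqxx mul1n.
  have -> : count_mem s [seq y <- p1 | s < y] = 0.
    by apply/count_memPn; rewrite mem_filter ltnn.
  by [].
have hc2 : count_mem s (sort geq (nseq (nu p1 - j) s ++ G s p2)) = nu p1 - j.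
  by rewrite count_sort count_cat count_nseq /= eqxx mul1n count_G_s // addn0.
rewrite hc1 hc2; congr (_, _, _).
  apply: sort_eq => //; apply/permP => a.
  rewrite count_cat count_sort count_cat !count_nseq (decomp_count p1 s a sge) hnu.
  have e : a s * j + a s * (nu p1 - j) = a s * nu p1 by rewrite -mulnDr subnKC.
  lia.
set L := [seq y <- sort geq (nseq (nu p1 - j) s ++ G s p2) | s < y].
have hL : perm_eq L (G s p2).
  apply/permP => a; rewrite /L count_filter count_sort count_cat count_nseq /= ltnn andbF mul0n add0n.
  by apply: eq_in_count => y /(allP (G_gt sp2)) /= ->; rewrite andbT.
have hall : all (allowed s) L by rewrite (perm_all _ hL) G_allowed.
have sp2g : sorted geq p2.
  have : sorted gtn p2 := sp2'.
  by rewrite gtn_sorted_uniq_geq => /andP [].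
apply: sort_eq => //; apply: uniq_perm => //; first exact: (H_uniq s L hall).
move=> x; rewrite (mem_H s L x hall).
case: (ltnP s x) => hx /=; last first.
  by apply/esym/negP => /(allP sp2); rewrite ltnNge hx.
rewrite (pcount _ hL) G_count sum_to_E mem_bits_sum ?E_mem ?E_uniq //.
Qed.

Lemma perm_sortg (X : seq nat) : perm_eq (sort geq X) X.
Proof. by rewrite perm_sort. Qed.

Lemma PhiPsi y : is_SPbar y -> PhiR (PsiR y) = y.
Proof.
case: y => l1 l2 hy.
have hsp := PsiR_spart hy.
have [s0 sin sge sge2 [sp1 sp2 hall]] := SP_facts hy.
rewrite /PsiR /PhiR hsp.
set s := spart l1 in hsp sin sge sge2 hall s0 *.
set t := count_mem s l2.
set L := [seq y <- l2 | s < y] in hall *.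
have hnu : nu (sort geq (l1 ++ nseq t s)) = count_mem s l1 + t.
  by rewrite (nu_eq _ s hsp) count_sort count_cat count_nseq /= eqxx mul1n.
rewrite hnu addKn; congr (_, _).
  apply: sort_eq => //; apply/permP => a.
  rewrite count_cat count_filter count_sort count_cat !count_nseq /= ltnn andbF mul0n addn0.
  by rewrite (decomp_count l1 s a sge) count_filter.
apply: sort_eq => //; apply: perm_cm => x.
rewrite count_cat count_nseq G_count (perm_big _ (perm_sortg _)) (H_count2 s L x hall).
rewrite (decomp_count l2 s (pred1 x) sge2) /L /= addnC.
by [].
Qed.

Definition Phi (x : Mset) : SPset := exist _ (PhiR (val x)) (PhiR_ok _ (valP x)).
Definition Psi (y : SPset) : Mset := exist _ (PsiR (val y)) (PsiR_ok _ (valP y)).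

Theorem mainTheorem16 :
  exists Phi : Mset -> SPset,
    bijective Phi /\
    forall x : Mset,
      weightSP (val (Phi x)) = weightM (val x) /\
      kbar (val x) = kSP (val (Phi x)) /\
      sptcrank (val x) = crankSP (val (Phi x)).
Proof.
exists Phi; split.
  exists Psi.
    by move=> x; apply: val_inj; rewrite /= PsiPhi //; apply: valP.
  by move=> y; apply: val_inj; rewrite /= PhiPsi //; apply: valP.
move=> x; have [h1 h2 h3] := PhiR_stats _ (valP x).
by split; [|split].
Qed.
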